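(* States $|\psi\rangle\in H_s$ that cannot be trained by QAOA with target state $|0\rangle^{\otimes n}$ necessarily satisfy \begin{align} A_1=\langle e_1|\psi\rangle \propto \langle 0|^{\otimes n}\mathcal{H}_x|\psi\rangle\propto\langle 0|^{\otimes n}X|\psi\rangle=0,\\ |A_2|=|\langle e_2|\psi\rangle|\le\sqrt{\dfrac{2n}{n-1}}\,|\langle 0|^{\otimes n}|\psi\rangle| . \end{align}
   Context: QAOA on $n$ qubits prepares $|\psi_p(\boldsymbol\gamma,\boldsymbol\beta)\rangle=\prod_{k=1}^p e^{-i\beta_k\mathcal{H}_x}e^{-i\gamma_k|\boldsymbol t\rangle\langle\boldsymbol t|}|+\rangle^{\otimes n}$ with $\mathcal{H}_x=\sum_{i=1}^n X_i$ (Pauli $X$ on qubit $i$), $\gamma_k\in[0,2\pi)$, $\beta_k\in[0,\pi)$; here the target is $|\boldsymbol t\rangle=|0\rangle^{\otimes n}$ and the objective is the overlap $|\langle \boldsymbol t|\psi_p\rangle|^2$. In layerwise training, one layer is added at a time and only the new layer's parameters $(\beta_c,\gamma_c)$ are optimized, so $|\psi_c\rangle=e^{-i\beta_c\mathcal{H}_x}e^{-i\gamma_c|0\rangle^{\otimes n}\langle 0|^{\otimes n}}|\psi_{c-1}\rangle$. $H_s$ is the symmetric subspace, spanned by states invariant under every permutation $P_{ij}$ of two qubits; it has the orthonormal Dicke basis $|e_k\rangle$, $k=0,\dots,n$, where $|e_k\rangle$ is the normalized uniform superposition of all $n$-qubit computational basis states of Hamming weight $k$ (so $|e_0\rangle=|0\rangle^{\otimes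 n}$). All QAOA states with this target lie in $H_s$, and $A_k=\langle e_k|\psi\rangle$. A state ''cannot be trained'' means that applying a further layer $e^{-i\beta\mathcal{H}_x}e^{-i\gamma|0\rangle^{\otimes n}\langle 0|^{\otimes n}}$ and optimizing over $(\beta,\gamma)$ cannot increase the overlap with $|0\rangle^{\otimes n}$, i.e. the function $g(\beta)=\cos^n\beta\,\big(|A_0|+|\sum_{k=1}^n(-i\tan\beta)^kA_k\sqrt{C_n^k}|\big)$ (the overlap modulus already maximized over $\gamma$) has its global maximum at $\beta=0$. *)

(* Defs.v *)
From HB Require Import structures.
From mathcomp Require Import all_boot all_order all_algebra.
From mathcomp Require Import complex.
From mathcomp Require Import reals trigo.
Set Implicit Arguments. Unset Strict Implicit. Unset Printing Implicit Defensive.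
Import Order.TTheory GRing.Theory Num.Theory.
Local Open Scope ring_scope.
Local Open Scope complex_scope.

(* Amplitudes A k = <e_k|psi>, k = 0..n, of a state in the symmetric subspace
   expressed in the Dicke basis (values of A at k > n are irrelevant). *)

Definition qaoa_g {R : realType} (n : nat) (A : nat -> R[i]) (beta : R) : R :=
  cos beta ^+ n *
  (Normc.normc (A 0%N) +
   Normc.normc (\sum_(1 <= k < n.+1)
            (- 'i * (tan beta)%:C) ^+ k * A k * (Num.sqrt ('C(n, k))%:R)%:C)).

Definition cannot_be_trained {R : realType} (n : nat) (A : nat -> R[i]) : Prop :=
  forall beta : R, 0 <= beta < pi -> qaoa_g n A beta <= qaoa_g n A 0.

(* Main.v *)
Require Import Defs.
From HB Require Import structures.
From mathcomp Require Import all_boot all_order all_algebra.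
From mathcomp Require Import complex.
From mathcomp Require Import reals trigo.
From mathcomp Require Import ring lra zify.
Import Order.TTheory GRing.Theory Num.Theory.
Local Open Scope ring_scope.
Local Open Scope complex_scope.

Section S.
Variable R : realType.
Local Notation nc := (@Normc.normc R).

Lemma nc_ge0 (x : R[i]) : 0 <= nc x.
Proof. by case: x => a b /=; apply: sqrtr_ge0. Qed.

Lemma ncC (r : R) : nc (r%:C) = `|r|.
Proof. by rewrite /= expr0n /= addr0 sqrtr_sqr. Qed.

Lemma nci : nc 'i = 1.
Proof. by rewrite /= expr0n /= expr1n add0r sqrtr1. Qed.

Lemma ncX (x : R[i]) k : nc (x ^+ k) = nc x ^+ k.
Proof.
elim: k => [|k IH]; first by rewrite !expr0 Normc.normc1.
by rewrite !exprS Normc.normcM IH.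
Qed.

Lemma nc_sum (m p : nat) (F : nat -> R[i]) :
  nc (\sum_(m <= k < p) F k) <= \sum_(m <= k < p) nc (F k).
Proof.
apply: (big_ind2 (fun x y => nc x <= y)).
- by rewrite Normc.normc0.
- move=> x1 x2 y1 y2 h1 h2; apply: le_trans (le_normcD _ _) _; exact: lerD.
- by [].
Qed.

Lemma nc_term (t : R) (a : R[i]) (s : R) k : 0 <= t -> 0 <= s ->
  nc ((- 'i * t%:C) ^+ k * a * s%:C) = t ^+ k * nc a * s.
Proof.
move=> ht hs; rewrite !Normc.normcM ncX Normc.normcM.
rewrite -[nc (- 'i)]/(nc (- 'i)) (normcN (R:=R) 'i).
by rewrite nci mul1r !ncC !ger0_norm.
Qed.

Lemma limit0 (X C : R) : (forall t, 0 < t <= 1 -> X <= t * C) -> X <= 0.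
Proof.
move=> H; rewrite leNgt; apply/negP => hX.
have [hC|hC] := lerP C 0.
  have h := H 1; rewrite ltr01 lexx mul1r in h; have := h isT; lra.
set t := X / (X + C).
have hXC : 0 < X + C by lra.
have ht : t * (X + C) = X by rewrite /t mulrVK ?unitfE ?gt_eqF.
have ht0 : 0 < t by rewrite /t divr_gt0.
have htX : 0 < t * X by rewrite mulr_gt0.
have : X <= t * C.
  apply: H; rewrite ht0 /= /t ler_pdivrMr // mul1r; lra.
nra.
Qed.

Lemma pow_bound n : exists K : R, 0 <= K /\
  forall x, 0 <= x <= 1 -> (1 + x) ^+ n <= 1 + n%:R * x + K * x ^+ 2.
Proof.
elim: n => [|n [K [hK IH]]].
  exists 0; split => [|x _]; first exact: lexx.
  rewrite expr0 !mul0r !addr0; exact: lexx.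
exists (n%:R + K *+ 2); split.
  apply: addr_ge0; [exact: ler0n | exact: mulrn_wge0].
move=> x /andP[hx0 hx1].
have h1 := IH x; rewrite hx0 hx1 in h1; have {}h1 := h1 isT.
rewrite exprSr.
have h2 : (1 + x) ^+ n * (1 + x) <= (1 + n%:R * x + K * x ^+ 2) * (1 + x).
  by apply: ler_wpM2r => //; lra.
have h3 : K * x ^+ 2 * x <= K * x ^+ 2.
  by rewrite -{2}[K * x ^+ 2]mulr1 ler_wpM2l // mulr_ge0 // sqr_ge0.
have hn : 0 <= (n%:R : R) by [].
apply: le_trans h2 _.
rewrite -natr1 mulrS.
have h4 : (n%:R : R) * x ^+ 2 = n%:R * x * x by rewrite expr2 mulrA.
nra.
Qed.

Definition sk (n k : nat) : R := Num.sqrt ('C(n, k))%:R.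
Definition uk (n : nat) (A : nat -> R[i]) (t : R) (k : nat) : R[i] :=
  (- 'i * t%:C) ^+ k * A k * (sk n k)%:C.

Lemma tail_bound n A t m p : 0 <= t <= 1 ->
  nc (\sum_(m <= k < p) uk n A t k) <= t ^+ m * \sum_(m <= k < p) nc (A k) * sk n k.
Proof.
case/andP=> ht0 ht1.
apply: le_trans (nc_sum _ _ _) _; rewrite mulr_sumr; apply: ler_sum_nat => k /andP[hk _].
rewrite /uk nc_term //; last exact: sqrtr_ge0.
rewrite -mulrA ler_wpM2r //; first by rewrite mulr_ge0 ?nc_ge0 ?sqrtr_ge0.
exact: ler_wiXn2l.
Qed.

Lemma g0 n A : qaoa_g n A 0 = nc (A 0%N).
Proof.
rewrite /qaoa_g cos0 tan0 expr1n mul1r.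
rewrite big_nat_cond big1 ?Normc.normc0 ?addr0 // => k /andP[/andP[hk _] _].
rewrite mulr0 expr0n; case: k hk => // k _ /=; by rewrite !mul0r.
Qed.

Lemma key n A t : cannot_be_trained n A -> 0 < t <= 1 ->
  nc (A 0%N) + nc (\sum_(1 <= k < n.+1) uk n A t k) <= nc (A 0%N) * (1 + t ^+ 2) ^+ n.
Proof.
move=> hn /andP[ht0 ht1].
set b := atan t.
have hb0 : 0 < b by have := lt_atan ht0; rewrite atan0.
have hbpi : b < pi.
  have := atan_ltpi2 t; have := (@pi_gt0 R); rewrite -/b; lra.
have H := hn b; rewrite ltW //= hbpi in H; have {}H := H isT.
rewrite g0 /qaoa_g atanK in H.
set c := cos b in H.
have hc : 0 < c by apply: cos_gt0_pihalf; rewrite atan_gtNpi2 atan_ltpi2.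
have hc1 : c <= 1 by exact: cos_le1.
have hc2 : (1 + t ^+ 2) * c ^+ 2 = 1.
  by rewrite -[t in 1 + t ^+ 2]atanK -cos2_tan2 ?gt_eqF // mulVf // expf_neq0 // gt_eqF.
set P := (1 + t ^+ 2) ^+ n.
have hPX : P * c ^+ n * c ^+ n = 1 by rewrite /P -!exprMn -mulrA -expr2 hc2 expr1n.
have hP : 0 < P by rewrite /P exprn_gt0 // ltr_pwDl // sqr_ge0.
have hX0 : 0 <= c ^+ n by rewrite exprn_ge0 // ltW.
have hX1 : c ^+ n <= 1 by rewrite exprn_ile1 // ltW.
set Y := nc (A 0%N) + _.
set a0 := nc (A 0%N) in H Y *.
have ha0 : 0 <= a0 by exact: nc_ge0.
have hY : Y = P * c ^+ n * (c ^+ n * Y) by rewrite mulrA hPX mul1r.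
rewrite hY; apply: le_trans (ler_wpM2l _ H) _.
  by rewrite mulr_ge0 // ltW.
have -> : P * c ^+ n * a0 = c ^+ n * (a0 * P) by ring.
by rewrite ler_piMl // mulr_ge0 // ltW.
Qed.

Lemma tri (x y : R[i]) : nc x <= nc (x + y) + nc y.
Proof. by have := le_normcD (x + y) (- y); rewrite addrK normcN. Qed.

End S.

Lemma bin2_mul n : ('C(n, 2) * 2 = n * n.-1)%N.
Proof.
elim: n => // n IH; rewrite binS bin1 mulnDl IH; case: n {IH} => //= n.
nia.
Qed.

Theorem proposition1 (R : realType) (n : nat) (A : nat -> R[i]) :
  (2 <= n)%N ->
  cannot_be_trained n A ->
  A 1%N = 0 /\
  Normc.normc (A 2%N) <= Num.sqrt ((2 * n)%:R / (n.-1)%:R) * Normc.normc (A 0%N).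
Proof.
move=> hn2 hct.
have [K [hK hpow]] := pow_bound R n.
set a0 := Normc.normc (A 0%N).
have ha0 : 0 <= a0 by exact: nc_ge0.
set M2 := \sum_(2 <= k < n.+1) Normc.normc (A k) * sk R n k.
set M3 := \sum_(3 <= k < n.+1) Normc.normc (A k) * sk R n k.
have hM2 : 0 <= M2 by rewrite /M2 big_nat sumr_ge0 // => k _; rewrite mulr_ge0 ?nc_ge0 ?sqrtr_ge0.
have hM3 : 0 <= M3 by rewrite /M3 big_nat sumr_ge0 // => k _; rewrite mulr_ge0 ?nc_ge0 ?sqrtr_ge0.
have split1 t : \sum_(1 <= k < n.+1) uk R n A t k =
    uk R n A t 1 + (uk R n A t 2 + \sum_(3 <= k < n.+1) uk R n A t k).
  have h1 : (1 < n.+1)%N by rewrite ltnS; apply: leq_trans hn2.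
  have h2 : (2 < n.+1)%N by rewrite ltnS.
  by rewrite (big_ltn h1) (big_ltn h2).
have base t : 0 < t <= 1 ->
    a0 + Normc.normc (\sum_(1 <= k < n.+1) uk R n A t k)
      <= a0 + a0 * n%:R * t ^+ 2 + a0 * K * t ^+ 3.
  move=> /andP[ht0 ht1].
  apply: le_trans (@key R n A t hct _) _; first by rewrite ht0 ht1.
  have ht2 : 0 <= t ^+ 2 <= 1 by rewrite sqr_ge0 /= exprn_ile1 // ltW.
  apply: le_trans (ler_wpM2l ha0 (hpow _ ht2)) _.
  have h43 : t ^+ 2 ^+ 2 <= t ^+ 3.
    by rewrite -exprM; apply: ler_wiXn2l => //; apply: ltW.
  have := ler_wpM2l (mulr_ge0 ha0 hK) h43.
  have -> : a0 * (1 + n%:R * t ^+ 2 + K * t ^+ 2 ^+ 2) =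
      a0 + a0 * n%:R * t ^+ 2 + a0 * K * t ^+ 2 ^+ 2 by ring.
  lra.
have hA1 : A 1%N = 0.
  apply: Normc.eq0_normc; apply/eqP; rewrite eq_le nc_ge0 andbT.
  have hs1 : 0 < sk R n 1 by rewrite /sk bin1 sqrtr_gt0 ltr0n; apply: leq_trans hn2.
  rewrite -(pmulr_rle0 _ hs1) mulrC.
  apply: (@limit0 R _ (M2 + a0 * n%:R + a0 * K)) => t /andP[ht0 ht1].
  have hb := base t (introT andP (conj ht0 ht1)).
  have ht01 : 0 <= t <= 1 by rewrite ltW.
  have ht : 0 <= t by apply: ltW.
  have h1 : (1 < n.+1)%N by rewrite ltnS; apply: leq_trans hn2.
  rewrite (big_ltn h1) in hb.
  have hT := @tail_bound R n A t 2 n.+1 ht01.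
  have hu := @tri R (uk R n A t 1) (\sum_(2 <= k < n.+1) uk R n A t k).
  rewrite {1}/uk nc_term ?expr1 // in hu; last exact: sqrtr_ge0.
  rewrite -/M2 in hT.
  have h32 : a0 * K * t ^+ 3 <= a0 * K * t ^+ 2.
    by rewrite ler_wpM2l ?mulr_ge0 //; apply: ler_wiXn2l.
  rewrite -(ler_pM2l ht0).
  have -> : t * (t * (M2 + a0 * n%:R + a0 * K)) = t ^+ 2 * M2 + a0 * n%:R * t ^+ 2 + a0 * K * t ^+ 2 by ring.
  have -> : t * (Normc.normc (A 1%N) * sk R n 1) = t * Normc.normc (A 1%N) * sk R n 1 by ring.
  lra.
split => //.
set a2 := Normc.normc (A 2%N).
have ha2 : 0 <= a2 by exact: nc_ge0.
have hs2 : 0 < sk R n 2.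
  rewrite /sk sqrtr_gt0 ltr0n bin_gt0 //.
have step : sk R n 2 * a2 <= n%:R * a0.
  rewrite -subr_le0.
  apply: (@limit0 R _ (M3 + a0 * K)) => t /andP[ht0 ht1].
  have hb := base t (introT andP (conj ht0 ht1)).
  have ht01 : 0 <= t <= 1 by rewrite ltW.
  have ht : 0 <= t by apply: ltW.
  have hu1 : uk R n A t 1 = 0 by rewrite /uk hA1 mulr0 mul0r.
  rewrite split1 hu1 add0r in hb.
  have hT := @tail_bound R n A t 3 n.+1 ht01.
  have hu := @tri R (uk R n A t 2) (\sum_(3 <= k < n.+1) uk R n A t k).
  rewrite {1}/uk nc_term // in hu; last exact: sqrtr_ge0.
  rewrite -/M3 -/a2 in hT hu.
  have ht2 : 0 < t ^+ 2 by rewrite exprn_gt0.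
  rewrite -(ler_pM2l ht2).
  have -> : t ^+ 2 * (t * (M3 + a0 * K)) = t ^+ 3 * M3 + a0 * K * t ^+ 3.
    by rewrite exprS; ring.
  have -> : t ^+ 2 * (sk R n 2 * a2 - n%:R * a0) = t ^+ 2 * a2 * sk R n 2 - a0 * n%:R * t ^+ 2 by ring.
  lra.
have hsq : Num.sqrt ((2 * n)%:R / (n.-1)%:R) * sk R n 2 = n%:R.
  have hq : 0 <= ((2 * n)%:R / (n.-1)%:R : R) by rewrite divr_ge0.
  rewrite /sk -sqrtrM //.
  have hb2 := bin2_mul n.
  case: n hn2 hb2 {hct hpow split1 base hs2 step M2 M3 hM2 hM3 hq} => // [[|m]] // _ hb2 /=.
  have hC : ('C(m.+2, 2)%:R : R) = (m.+2)%:R * (m.+1)%:R / 2.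
    by rewrite -natrM -hb2 natrM mulfK // pnatr_eq0.
  rewrite hC -[X in _ = X]ger0_norm ?ler0n // -sqrtr_sqr.
  congr Num.sqrt.
  rewrite natrM; field.
  by rewrite addrC natr1 pnatr_eq0.
rewrite -(ler_pM2l hs2) mulrA [sk R n 2 * Num.sqrt _]mulrC hsq.
exact: step.
Qed.
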